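(* There is no equal norm tight integer frame with an odd number of elements in $\mathcal{H}_2$.
   Context: $\mathcal{H}_M$ is the real $M$-dimensional Hilbert space, identified with $\mathbb{R}^M$ via a fixed orthonormal basis. An equal norm tight integer frame (ENTIF) with $N$ elements in $\mathcal{H}_M$ is an $M\times N$ integer matrix $A$ of rank $M$ with $AA^T=\lambda I_M$ for some $\lambda>0$ and all columns of the same Euclidean norm. *)

(* Defs.v *)
From mathcomp Require Import all_boot all_order all_algebra.
Set Implicit Arguments. Unset Strict Implicit. Unset Printing Implicit Defensive.
Import Order.TTheory GRing.Theory Num.Theory.
Local Open Scope ring_scope.

(* Rank is taken over the rationals (equivalently over the reals).
   Since columns are integer vectors, "same Euclidean norm" is equivalent
   to "same squared norm", stated here via the squared norm. *)
Definition is_ENTIF (M N : nat) (A : 'M[int]_(M, N)) : Prop :=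
  \rank (map_mx (intr : int -> rat) A) = M /\
  (exists lambda : int, 0 < lambda /\ A *m A^T = lambda%:M) /\
  (forall j k : 'I_N, \sum_(i < M) A i j ^+ 2 = \sum_(i < M) A i k ^+ 2).

(* Main.v *)
Require Import Defs.
From mathcomp Require Import all_boot all_order all_algebra.
From mathcomp Require Import zify ring.
Import Order.TTheory GRing.Theory Num.Theory.

Section Aux.
Local Open Scope ring_scope.

Definition phi (x : int) : 'Z_2 := x%:~R.

Lemma phiD x y : phi (x + y) = phi x + phi y.
Proof. by rewrite /phi intrD. Qed.
Lemma phiM x y : phi (x * y) = phi x * phi y.
Proof. by rewrite /phi intrM. Qed.
Lemma phi_sum N (F : 'I_N -> int) : phi (\sum_j F j) = \sum_j phi (F j).
Proof. by rewrite /phi rmorph_sum. Qed.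

Lemma Z2_cases (x: 'Z_2) : x = 0 \/ x = 1.
Proof. case: x => [[|[|m]] Hm]; [left|right|]; try exact/val_inj. by []. Qed.

Lemma Z2_sq (x : 'Z_2) : x ^+ 2 = x.
Proof. by case: (Z2_cases x) => ->; apply/val_inj. Qed.

Lemma Z2_add (x : 'Z_2) : x + x = 0.
Proof. by case: (Z2_cases x) => ->; apply/val_inj. Qed.

Lemma Z2_10 : (1 : 'Z_2) != 0.
Proof. by []. Qed.

Lemma Z2_odd (N:nat) : odd N -> (N%:R : 'Z_2) = 1.
Proof. move=> h; apply/val_inj; rewrite /= Zp_nat /= modn2 h //. Qed.

Lemma phi_cases (x : int) :
  (phi x = 0 /\ exists u, x = 2 * u) \/ (phi x = 1 /\ exists u, x = 2 * u + 1).
Proof.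
have Hx := divz_eq x 2.
have H0 : (0 <= (x %% 2)%Z) by apply: modz_ge0.
have H1 : ((x %% 2)%Z < 2) by have := ltz_pmod x (isT : (0 < 2 :> int)).
have Hp2 : phi 2 = 0 by apply/val_inj.
have [e|e] : (x %% 2)%Z = 0 \/ (x %% 2)%Z = 1 by lia.
- left; split; last by exists (x %/ 2)%Z; lia.
  by rewrite Hx phiD phiM Hp2 e mulr0 add0r.
- right; split; last by exists (x %/ 2)%Z; lia.
  by rewrite Hx phiD phiM Hp2 e mulr0 add0r; apply/val_inj.
Qed.

Lemma sum_one N : odd N -> \sum_(j < N) (1 : 'Z_2) = 1.
Proof. by move=> h; rewrite sumr_const card_ord Z2_odd. Qed.

Lemma parity N (a b : 'I_N -> int) : odd N ->
  (forall j k, a j ^+ 2 + b j ^+ 2 = a k ^+ 2 + b k ^+ 2) ->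
  \sum_j a j * b j = 0 ->
  \sum_j a j ^+ 2 = \sum_j b j ^+ 2 ->
  forall j, (2 %| a j)%Z /\ (2 %| b j)%Z.
Proof.
move=> oN Hc Hd Hn.
have j0 : 'I_N by exists 0%N; case: N oN {a b Hc Hd Hn}.
set c := a j0 ^+ 2 + b j0 ^+ 2.
have Hcj j : phi (a j) + phi (b j) = phi c.
  by rewrite /c -(Hc j) phiD !exprS !expr0 !mulr1 !phiM -!expr2 !Z2_sq.
have [[Pc _]|[Pc _]] := phi_cases c; last first.
  exfalso; have := congr1 phi Hn; rewrite !phi_sum.
  have E : forall j, phi (b j ^+ 2) = 1 + phi (a j ^+ 2).
    move=> j; rewrite !exprS !expr0 !mulr1 !phiM -!expr2 !Z2_sq.
    by rewrite -Pc -(Hcj j) addrC addrA Z2_add add0r.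
  rewrite (eq_bigr _ (fun j _ => E j)) big_split /= sum_one // => h.
  have : (1 : 'Z_2) = 0.
    by rewrite -(Z2_add (\sum_j phi (a j ^+ 2))) {1}h -addrA Z2_add addr0.
  by move/(congr1 val).
have Eab j : phi (a j) = phi (b j).
  have := Hcj j; rewrite Pc => h.
  by rewrite -[LHS]addr0 -(Z2_add (phi (b j))) addrA h add0r.
suff Hall : forall j, phi (a j) = 0.
  move=> j; have ha := Hall j; have hb : phi (b j) = 0 by rewrite -Eab.
  split.
  - case: (phi_cases (a j)) => [[_ [u ->]]|[h _]]; last by move: h; rewrite ha => /(congr1 val).
    by apply/dvdzP; exists u; rewrite mulrC.
  - case: (phi_cases (b j)) => [[_ [u ->]]|[h _]]; last by move: h; rewrite hb => /(congr1 val).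
    by apply/dvdzP; exists u; rewrite mulrC.
move=> j1; case: (phi_cases (a j1)) => [[//]|[h1 [p Ep]]].
exfalso.
have hb1 : phi (b j1) = 1 by rewrite -Eab.
have [q Eq] : exists q, b j1 = 2 * q + 1.
  case: (phi_cases (b j1)) => [[h _]|[_ //]].
  by move: h; rewrite hb1 => /(congr1 val).
have Hk : forall k, phi (a k) = 1.
  move=> k; case: (phi_cases (a k)) => [[h0 [u Eu]]|[//]].
  have [v Ev] : exists v, b k = 2 * v.
    case: (phi_cases (b k)) => [[_ //]|[h _]].
    by move: h; rewrite -Eab h0 => /(congr1 val).
  have := Hc j1 k; rewrite Ep Eq Eu Ev => E.
  have L : (4 * (p * p + p + q * q + q) + 2 : int) = (2 * p + 1) ^+ 2 + (2 * q + 1) ^+ 2 by ring.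
  have R : (2 * u) ^+ 2 + (2 * v) ^+ 2 = (4 * (u * u + v * v) : int) by ring.
  move: E; rewrite -L R; generalize (p * p + p + q * q + q) (u * u + v * v) => X Y; lia.
have := congr1 phi Hd; rewrite phi_sum.
under eq_bigr => k _ do rewrite phiM Hk -Eab Hk mulr1.
by rewrite sum_one // => /(congr1 val).
Qed.

Lemma descent k N (a b : 'I_N -> int) : odd N ->
  (forall j k, a j ^+ 2 + b j ^+ 2 = a k ^+ 2 + b k ^+ 2) ->
  \sum_j a j * b j = 0 ->
  \sum_j a j ^+ 2 = \sum_j b j ^+ 2 ->
  forall j, ((2 : int) ^+ k %| a j)%Z /\ ((2 : int) ^+ k %| b j)%Z.
Proof.
elim: k a b => [|k IH] a b oN Hc Hd Hn j.
  by rewrite expr0; split; apply: dvd1z.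
have P := @parity N a b oN Hc Hd Hn.
pose a' i := (a i %/ 2)%Z; pose b' i := (b i %/ 2)%Z.
have Ea i : a i = a' i * 2 by rewrite /a' divzK //; case: (P i).
have Eb i : b i = b' i * 2 by rewrite /b' divzK //; case: (P i).
have sq x y : (x * 2) ^+ 2 + (y * 2) ^+ 2 = (x ^+ 2 + y ^+ 2) * 4 :> int by ring.
have four : (4 : int) != 0 by [].
have Hc' : forall j k, a' j ^+ 2 + b' j ^+ 2 = a' k ^+ 2 + b' k ^+ 2.
  move=> j1 k1; apply: (mulIf four); rewrite -!sq -Ea -Eb -Ea -Eb; exact: Hc.
have Hd' : \sum_j a' j * b' j = 0.
  apply: (mulIf four); rewrite mul0r mulr_suml -[RHS]Hd.
  by apply: eq_bigr => i _; rewrite (Ea i) (Eb i); ring.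
have Hn' : \sum_j a' j ^+ 2 = \sum_j b' j ^+ 2.
  apply: (mulIf four); rewrite !mulr_suml.
  rewrite (eq_bigr (fun i => a i ^+ 2)); last by move=> i _; rewrite (Ea i); ring.
  rewrite Hn; apply: eq_bigr => i _; rewrite (Eb i); ring.
have [h1 h2] := IH a' b' oN Hc' Hd' Hn' j.
by rewrite exprSr (Ea j) (Eb j); split; apply: dvdz_mul.
Qed.

Lemma all_zero N (a b : 'I_N -> int) : odd N ->
  (forall j k, a j ^+ 2 + b j ^+ 2 = a k ^+ 2 + b k ^+ 2) ->
  \sum_j a j * b j = 0 ->
  \sum_j a j ^+ 2 = \sum_j b j ^+ 2 ->
  forall j, a j = 0.
Proof.
move=> oN Hc Hd Hn j.
have [h _] := @descent `|a j|%N N a b oN Hc Hd Hn j.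
move: h; rewrite dvdzE abszX /= => h.
apply/eqP; rewrite -absz_eq0; apply/eqP.
case E: `|a j|%N h => [//|n] h; exfalso.
have := dvdn_leq (isT : (0 < n.+1)%N) h.
by rewrite -E leqNgt ltn_expl.
Qed.
End Aux.

Theorem theorem4p8 (N : nat) (A : 'M[int]_(2, N)) :
  odd N -> ~ is_ENTIF A.
Proof.
move=> oN [_ [[lam [lam0 HA]] Hcol]].
have e i k : (\sum_j A i j * A k j = lam *+ (i == k))%R.
  have := congr1 (fun M : 'M[int]_2 => M i k) HA; rewrite !mxE => <-.
  by apply: eq_bigr => j _; rewrite mxE.
pose a j := A ord0 j; pose b j := A (lift ord0 ord0) j.
have Hc : forall j k, (a j ^+ 2 + b j ^+ 2 = a k ^+ 2 + b k ^+ 2)%R.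
  move=> j k; have := Hcol j k; rewrite !big_ord_recl !big_ord0 !addr0.
  by move=> h; exact: h.
have Hd : (\sum_j a j * b j = 0)%R by rewrite e.
have Hn : (\sum_j a j ^+ 2 = \sum_j b j ^+ 2)%R.
  rewrite (eq_bigr (fun j => A ord0 j * A ord0 j)%R); last by move=> j _; rewrite expr2.
  rewrite (eq_bigr (fun j => A (lift ord0 ord0) j * A (lift ord0 ord0) j)%R (fun j _ => expr2 _)).
  by rewrite !e.
have Z := @all_zero N a b oN Hc Hd Hn.
have := e ord0 ord0; rewrite big1 ?eqxx ?mulr1n; last by move=> j _; rewrite -/(a j) Z mul0r.
by move=> h; move: lam0; rewrite -h ltxx.
Qed.
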